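(* Let $\rho=\sqrt2$ and $Z[\rho]=\{\pm z: z=\sum_{k=0}^n z_k\rho^k,\ n\ge0,\ z_k\in\{0,1\}\}$. Then $\mathbb{Z}$ is a proper subset of $Z[\rho]$. *)

(* Defs.v *)
From mathcomp Require Import all_boot all_order all_algebra.
From mathcomp Require Import reals.
Set Implicit Arguments. Unset Strict Implicit. Unset Printing Implicit Defensive.
Import Order.TTheory GRing.Theory Num.Theory.
Local Open Scope ring_scope.

Definition rho (R : realType) : R := Num.sqrt (2 : R).

Definition rho_digit_sum (R : realType) (n : nat) (z : 'I_n.+1 -> bool) : R :=
  \sum_(k < n.+1) ((z k : nat)%:R) * (rho R) ^+ k.

Definition in_Zrho (R : realType) (x : R) : Prop :=
  exists (n : nat) (z : 'I_n.+1 -> bool),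
    x = @rho_digit_sum R n z \/ x = - @rho_digit_sum R n z.

Definition is_integer (R : realType) (x : R) : Prop :=
  exists m : int, x = m%:~R.

(* Main.v *)
Require Import Defs.
From mathcomp Require Import all_boot all_order all_algebra.
From mathcomp Require Import reals.
From mathcomp Require Import lra.
Import Order.TTheory GRing.Theory Num.Theory.
Local Open Scope ring_scope.

Lemma rho2 (R : realType) : rho R ^+ 2 = 2.
Proof. by rewrite /rho sqr_sqrtr // ler0n. Qed.

Lemma nat_digits (R : realType) (N : nat) :
  exists n (z : 'I_n.+1 -> bool), (N%:R : R) = @rho_digit_sum R n z.
Proof.
elim: N {-2}N (leqnn N) => [|M IH] N HN.
  exists 0%N, (fun _ => false).
  by move: HN; rewrite leqn0 => /eqP ->; rewrite /rho_digit_sum big_ord1 mul0r.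
case: (posnP N) => [->|Npos].
  by exists 0%N, (fun _ => false); rewrite /rho_digit_sum big_ord1 mul0r.
have Hq : (N %/ 2 <= M)%N.
  apply: leq_trans (_ : N.-1 <= M)%N; last by rewrite -ltnS prednK.
  by rewrite -ltnS prednK // ltn_Pdiv.
have [n [z Hz]] := IH _ Hq.
pose b := odd N.
exists n.+2, (fun k : 'I_n.+3 => match val k with
  | 0%N => b | 1%N => false | k'.+2 => z (inord k') end).
rewrite /rho_digit_sum big_ord_recl big_ord_recl /=.
have -> : \sum_(i < n.+1)
   ((match val (lift ord0 (lift ord0 i)) with
     | 0%N => b | 1%N => false | k'.+2 => z (inord k') end : nat)%:R
     * rho R ^+ (lift ord0 (lift ord0 i)))
   = 2 * @rho_digit_sum R n z.
  rewrite /rho_digit_sum mulr_sumr; apply: eq_bigr => i _.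
  rewrite /= /bump /= !add1n inord_val.
  by rewrite -addn2 exprD rho2 mulrA mulrC.
rewrite -Hz expr0 mulr1 mul0r add0r.
rewrite {1}(divn_eq N 2) modn2 natrD natrM /b.
by rewrite mulrC addrC.
Qed.

Theorem mainTheorem12 (R : realType) :
  (forall m : int, in_Zrho (m%:~R : R)) /\
  (exists x : R, in_Zrho x /\ ~ is_integer x).
Proof.
split.
  case=> N.
    have [n [z Hz]] := nat_digits R N.
    by exists n, z; left; rewrite -Hz.
  have [n [z Hz]] := nat_digits R N.+1.
  by exists n, z; right; rewrite NegzE mulrNz -Hz.
exists (rho R); split.
  exists 1%N, (fun k : 'I_2 => val k == 1%N); left.
  by rewrite /rho_digit_sum big_ord_recl big_ord1 /= mul0r add0r mul1r expr1.
move=> [m Hm].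
have h0 : 0 <= rho R by rewrite /rho sqrtr_ge0.
have e : rho R * rho R = 2 by rewrite -expr2 rho2.
have h1 : 1 < rho R by nra.
have h2 : rho R < 2 by nra.
rewrite Hm in h1 h2.
have a : (1 < m)%R by rewrite -(ltr_int R).
have c : (m < 2)%R by rewrite -(ltr_int R).
by clear Hm h1 h2; move: a c; case: m => [[|[|[|k]]]|k].
Qed.
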